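(* Let $\mathsf{K}$ be a universal class of $\mathcal{L}$-algebras. If $\mathrm{Th}(\mathsf{K})$ has a model completion, then $\mathsf{K}$ has the variable projection property.
   Context: $\mathcal{L}$ is an algebraic first-order language with at least one constant symbol. A universal class is closed under isomorphic images, subalgebras and ultraproducts. A model completion of a theory $T$ is a model complete theory $T^*$ with the same universal consequences as $T$ such that for every model $M$ of $T$, $T^*$ plus the diagram of $M$ is complete. $\mathsf{K}\models\alpha$ (for quantifier-free $\alpha$) means all members satisfy $\alpha$ under all assignments. $\mathsf{K}$ has the variable projection property if for every finite set of variables $\overline{x}$, variable $y\notin\overline{x}$, and conjunction of equations $\varphi(\overline{x},y)$ there is a quantifier-free formula $\xi(\overline{x})$ such that $\mathsf{K}\models\varphi\to\xi$ and for every equation $\varepsilon(\overline{x})$, $\mathsf{K}\models\varphi\to\varepsilon$ implies $\mathsf{K}\models\xi\to\varepsilon$. *)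

(* Defs.v *)
From Stdlib Require Import List.
From Stdlib Require Vectors.Fin.
Import ListNotations.

Set Implicit Arguments.

Record Lang := { Fsym : Type; arity : Fsym -> nat }.

Definition has_constant (L : Lang) : Prop := exists c : Fsym L, arity L c = 0.

Definition Lexp (L : Lang) (C : Type) : Lang :=
  {| Fsym := (Fsym L + C)%type;
     arity := fun s => match s with inl f => arity L f | inr _ => 0 end |}.

Inductive term (L : Lang) : Type :=
| var : nat -> term L
| app : forall f : Fsym L, (Fin.t (arity L f) -> term L) -> term L.
Arguments var {L} _.

Inductive formula (L : Lang) : Type :=
| Fal  : formula L
| Eq   : term L -> term L -> formula L
| Neg  : formula L -> formula L
| Conj : formula L -> formula L -> formula L
| Disj : formula L -> formula L -> formula L
| Imp  : formula L -> formula L -> formula L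
| Ex   : nat -> formula L -> formula L
| All  : nat -> formula L -> formula L.
Arguments Fal {L}.

Fixpoint tvars_in (L : Lang) (P : nat -> Prop) (t : term L) : Prop :=
  match t with
  | var n => P n
  | app f a => forall i, tvars_in P (a i)
  end.

Fixpoint fvars_in (L : Lang) (P : nat -> Prop) (phi : formula L) : Prop :=
  match phi with
  | Fal => True
  | Eq t1 t2 => tvars_in P t1 /\ tvars_in P t2
  | Neg p => fvars_in P p
  | Conj p q | Disj p q | Imp p q => fvars_in P p /\ fvars_in P q
  | Ex x p | All x p => fvars_in (fun n => n = x \/ P n) p
  end.

Definition sentence (L : Lang) (phi : formula L) : Prop :=
  fvars_in (fun _ => False) phi.

Fixpoint qfree (L : Lang) (phi : formula L) : Prop :=
  match phi with
  | Fal | Eq _ _ => True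
  | Neg p => qfree p
  | Conj p q | Disj p q | Imp p q => qfree p /\ qfree q
  | Ex _ _ | All _ _ => False
  end.

Fixpoint universal (L : Lang) (phi : formula L) : Prop :=
  match phi with
  | All _ p => universal p
  | p => qfree p
  end.

Record structure (L : Lang) := {
  carrier :> Type;
  interp : forall f : Fsym L, (Fin.t (arity L f) -> carrier) -> carrier }.

Fixpoint eval (L : Lang) (A : structure L) (e : nat -> A) (t : term L) : A :=
  match t with
  | var n => e n
  | app f a => interp A f (fun i => eval A e (a i))
  end.

Definition upd (A : Type) (e : nat -> A) (x : nat) (a : A) : nat -> A :=
  fun n => if Nat.eqb n x then a else e n.

Fixpoint sat (L : Lang) (A : structure L) (e : nat -> A) (phi : formula L)
  : Prop :=
  match phi with
  | Fal => False
  | Eq t1 t2 => eval A e t1 = eval A e t2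
  | Neg p => ~ sat A e p
  | Conj p q => sat A e p /\ sat A e q
  | Disj p q => sat A e p \/ sat A e q
  | Imp p q => sat A e p -> sat A e q
  | Ex x p => exists a : A, sat A (upd e x a) p
  | All x p => forall a : A, sat A (upd e x a) p
  end.

Definition hom (L : Lang) (A B : structure L) (h : A -> B) : Prop :=
  forall f (args : Fin.t (arity L f) -> A),
    h (interp A f args) = interp B f (fun i => h (args i)).

Definition embedding (L : Lang) (A B : structure L) (h : A -> B) : Prop :=
  hom A B h /\ (forall a b, h a = h b -> a = b).

Definition isomorphism (L : Lang) (A B : structure L) (h : A -> B) : Prop :=
  embedding A B h /\ (forall b, exists a, h a = b).

Definition elementary (L : Lang) (A B : structure L) (h : A -> B) : Prop :=
  forall (phi : formula L) (e : nat -> A), sat A e phi <-> sat B (fun n => h (e n)) phi.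

Definition op_closed (L : Lang) (A : structure L) (P : A -> Prop) : Prop :=
  forall f (args : Fin.t (arity L f) -> A),
    (forall i, P (args i)) -> P (interp A f args).

Definition subalgebra (L : Lang) (A : structure L) (P : A -> Prop)
  (HP : op_closed A P) : structure L :=
  {| carrier := { x : A | P x };
     interp := fun f args =>
       exist P (interp A f (fun i => proj1_sig (args i)))
             (HP f _ (fun i => proj2_sig (args i))) |}.

Definition ultrafilter (I : Type) (U : (I -> Prop) -> Prop) : Prop :=
  U (fun _ => True) /\ ~ U (fun _ => False) /\
  (forall S T : I -> Prop, U S -> (forall i, S i -> T i) -> U T) /\
  (forall S T : I -> Prop, U S -> U T -> U (fun i => S i /\ T i)) /\
  (forall S : I -> Prop, U S \/ U (fun i => ~ S i)).

(** B is (a realization of) the ultraproduct prod_U A_i: pi is the quotient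
    map from the direct product onto B, identifying U-almost-equal
    tuples, and operations are computed coordinatewise. *)
Definition is_ultraproduct (L : Lang) (I : Type) (U : (I -> Prop) -> Prop)
  (A : I -> structure L) (B : structure L) : Prop :=
  exists pi : (forall i, A i) -> B,
    (forall b, exists a, pi a = b) /\
    (forall a a', pi a = pi a' <-> U (fun i => a i = a' i)) /\
    (forall f (args : Fin.t (arity L f) -> forall i, A i),
        pi (fun i => interp (A i) f (fun k => args k i))
        = interp B f (fun k => pi (args k))).

Definition universal_class (L : Lang) (K : structure L -> Prop) : Prop :=
  (forall (A B : structure L) (h : A -> B), K A -> isomorphism A B h -> K B) /\
  (forall (A : structure L) (P : A -> Prop) (HP : op_closed A P),
      K A -> K (@subalgebra L A P HP)) /\
  (forall (I : Type) (U : (I -> Prop) -> Prop) (A : I -> structure L)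
          (B : structure L),
      ultrafilter U -> (forall i, K (A i)) -> is_ultraproduct U A B -> K B).

Definition theory (L : Lang) := formula L -> Prop.

Definition models (L : Lang) (T : theory L) (A : structure L) : Prop :=
  forall phi, T phi -> forall e : nat -> A, sat A e phi.

Definition entails (L : Lang) (T : theory L) (phi : formula L) : Prop :=
  forall A : structure L, models T A -> forall e : nat -> A, sat A e phi.

Definition Th (L : Lang) (K : structure L -> Prop) : theory L :=
  fun phi => sentence phi /\ forall A, K A -> forall e : nat -> A, sat A e phi.

Definition complete (L : Lang) (T : theory L) : Prop :=
  forall phi, sentence phi -> entails T phi \/ entails T (Neg phi).

Definition model_complete (L : Lang) (T : theory L) : Prop :=
  forall (A B : structure L) (h : A -> B),
    models T A -> models T B -> embedding A B h -> elementary A B h.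

Fixpoint tlift (L : Lang) (C : Type) (t : term L) : term (Lexp L C) :=
  match t with
  | var n => var n
  | app f a => @app (Lexp L C) (inl f) (fun i => tlift C (a i))
  end.

Fixpoint flift (L : Lang) (C : Type) (phi : formula L) : formula (Lexp L C) :=
  match phi with
  | Fal => Fal
  | Eq t1 t2 => Eq (tlift C t1) (tlift C t2)
  | Neg p => Neg (flift C p)
  | Conj p q => Conj (flift C p) (flift C q)
  | Disj p q => Disj (flift C p) (flift C q)
  | Imp p q => Imp (flift C p) (flift C q)
  | Ex x p => Ex x (flift C p)
  | All x p => All x (flift C p)
  end.

Definition lift_theory (L : Lang) (C : Type) (T : theory L) : theory (Lexp L C) :=
  fun psi => exists phi, T phi /\ psi = flift C phi.

Definition expand (L : Lang) (M : structure L) : structure (Lexp L M) :=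
  {| carrier := M;
     interp := fun s =>
       match s return (Fin.t (arity (Lexp L M) s) -> M) -> M with
       | inl f => fun args => interp M f args
       | inr m => fun _ => m
       end |}.

Definition diagram (L : Lang) (M : structure L) : theory (Lexp L M) :=
  fun psi => sentence psi /\
    (exists t1 t2, psi = Eq t1 t2 \/ psi = Neg (Eq t1 t2)) /\
    (forall e : nat -> M, sat (expand M) e psi).

Definition model_completion (L : Lang) (T Tstar : theory L) : Prop :=
  model_complete Tstar /\
  (forall phi, sentence phi -> universal phi ->
       (entails T phi <-> entails Tstar phi)) /\
  (forall M : structure L, models T M ->
       complete (fun psi => @lift_theory L M Tstar psi \/ diagram M psi)).

Definition Kvalid (L : Lang) (K : structure L -> Prop) (alpha : formula L) : Prop :=
  forall A, K A -> forall e : nat -> A, sat A e alpha.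

Definition eq_conj (L : Lang) (eqs : list (term L * term L)) : formula L :=
  fold_right (fun p acc => Conj (Eq (fst p) (snd p)) acc) (Neg Fal) eqs.

Definition var_projection (L : Lang) (K : structure L -> Prop) : Prop :=
  forall (xs : list nat) (y : nat), ~ In y xs ->
  forall eqs : list (term L * term L),
    (forall p, In p eqs ->
       tvars_in (fun v => In v xs \/ v = y) (fst p) /\
       tvars_in (fun v => In v xs \/ v = y) (snd p)) ->
    exists xi : formula L,
      qfree xi /\ fvars_in (fun v => In v xs) xi /\
      Kvalid K (Imp (eq_conj eqs) xi) /\
      (forall t1 t2 : term L,
          tvars_in (fun v => In v xs) t1 -> tvars_in (fun v => In v xs) t2 ->
          Kvalid K (Imp (eq_conj eqs) (Eq t1 t2)) ->
          Kvalid K (Imp xi (Eq t1 t2))).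

(* Main.v *)
Require Import Defs.
From Stdlib Require Import List Classical ClassicalEpsilon FunctionalExtensionality PropExtensionality ProofIrrelevance.
From Stdlib Require Import PeanoNat Arith Lia.
Import ListNotations.
From mathcomp Require ssreflect ssrfun ssrbool boolp classical_sets filter.
Module UltraM.
Import ssreflect ssrfun ssrbool boolp classical_sets filter.
Lemma list_ultra (X : Type) : exists U : (list X -> Prop) -> Prop,
  ultrafilter U /\ forall x, U (fun i => In x i).
Proof.
set F0 := fun S : list X -> Prop => exists l, forall i, incl l i -> S i.
have PF : ProperFilter F0.
  split.
  - move=> [l Hl]. exact: (Hl l (incl_refl l)).
  - split.
    + exists nil => i _; exact I.
    + move=> A B [l1 H1] [l2 H2]; exists (l1 ++ l2) => i Hi; split.
      * apply: H1 => z Hz; apply: Hi; apply: in_or_app; left; exact Hz.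
      * apply: H2 => z Hz; apply: Hi; apply: in_or_app; right; exact Hz.
    + move=> P Q PQ [l Hl]; exists l => i Hi; apply: PQ; exact: Hl.
have [G [UG sub]] := ultraFilterLemma PF.
exists G; split.
- split; first exact: (@filterT _ G _).
  split; first exact: (@filter_not_empty _ G _).
  split; first by move=> S T GS ST; exact: (@filterS _ G _ S T ST GS).
  split; first by move=> S T GS GT; exact: (@filterI _ G _ S T GS GT).
  move=> S; exact: (in_ultra_setVsetC S UG).
- move=> x; apply: sub; exists [x] => i Hi; apply: Hi; left; reflexivity.
Qed.
End UltraM.
Definition list_ultra := UltraM.list_ultra.
Section Filt.
Variables (I : Type) (U : (I -> Prop) -> Prop) (HU : ultrafilter U).
Lemma U_true : U (fun _ => True). Proof. destruct HU; tauto. Qed.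
Lemma U_nfalse : ~ U (fun _ => False). Proof. destruct HU; tauto. Qed.
Lemma U_mono S T : U S -> (forall i, S i -> T i) -> U T.
Proof. destruct HU as (_&_&H&_); eauto. Qed.
Lemma U_and S T : U S -> U T -> U (fun i => S i /\ T i).
Proof. destruct HU as (_&_&_&H&_); eauto. Qed.
Lemma U_ultra S : U S \/ U (fun i => ~ S i).
Proof. destruct HU as (_&_&_&_&H); eauto. Qed.
Lemma U_all S : (forall i, S i) -> U S.
Proof. intro H. apply (U_mono _ _ U_true). auto. Qed.
Lemma U_not S : U (fun i => ~ S i) <-> ~ U S.
Proof.
  split.
  - intros H1 H2. apply U_nfalse. apply (U_mono _ _ (U_and _ _ H1 H2)). tauto.
  - intros H. destruct (U_ultra S); tauto.
Qed.
Lemma U_or S T : U (fun i => S i \/ T i) -> U S \/ U T.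
Proof.
  intros H. destruct (U_ultra S) as [H1|H1]; [now left|right].
  apply (U_mono _ _ (U_and _ _ H H1)). tauto.
Qed.
Lemma U_fin n (S : Fin.t n -> I -> Prop) :
  (forall k, U (S k)) -> U (fun i => forall k, S k i).
Proof.
  induction n as [|n IH]; intros H.
  - apply U_all. intros i k. exact (Fin.case0 (fun k => S k i) k).
  - pose proof (IH (fun k => S (Fin.FS k)) (fun k => H (Fin.FS k))) as H2.
    apply (U_mono _ _ (U_and _ _ (H Fin.F1) H2)).
    intros i [Ha Hb] k. apply (Fin.caseS' k (fun k => S k i)); auto.
Qed.
End Filt.
Arguments U_true {I U} HU.
Arguments U_nfalse {I U} HU.
Arguments U_mono {I U} HU {S T}.
Arguments U_and {I U} HU {S T}.
Arguments U_ultra {I U} HU S.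
Arguments U_all {I U} HU {S}.
Arguments U_not {I U} HU S.
Arguments U_or {I U} HU {S T}.
Arguments U_fin {I U} HU {n} S.

Section UP.
Variable L : Lang.
Variables (I : Type) (U : (I -> Prop) -> Prop) (HU : ultrafilter U) (Bs : I -> structure L).

Definition cls (a : forall i, Bs i) : (forall i, Bs i) -> Prop :=
  fun b => U (fun i => a i = b i).
Definition UPcar := { P : (forall i, Bs i) -> Prop | exists a, P = cls a }.
Definition rep (x : UPcar) : forall i, Bs i :=
  proj1_sig (constructive_indefinite_description _ (proj2_sig x)).
Lemma rep_spec x : proj1_sig x = cls (rep x).
Proof. unfold rep. destruct constructive_indefinite_description. auto. Qed.
Definition upi (a : forall i, Bs i) : UPcar := exist _ (cls a) (ex_intro _ a eq_refl).
Definition UPstr : structure L :=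
  {| carrier := UPcar;
     interp := fun f args => upi (fun i => interp (Bs i) f (fun k => rep (args k) i)) |}.

Lemma upi_eq a b : upi a = upi b <-> U (fun i => a i = b i).
Proof.
  split.
  - intros H. apply (f_equal (@proj1_sig _ _)) in H. simpl in H.
    assert (Hb : cls b b) by (apply (U_all HU); auto).
    rewrite <- H in Hb. exact Hb.
  - intros H. apply subset_eq_compat. apply functional_extensionality. intro c.
    apply propositional_extensionality. unfold cls. split; intro H2.
    + apply (U_mono HU (U_and HU H (U_and HU H H2))). intros i [h1 [h2 h3]]. congruence.
    + apply (U_mono HU (U_and HU H H2)). intros i [h1 h2]. congruence.
Qed.

Lemma upi_rep x : upi (rep x) = x.
Proof.
  destruct x as [P HP]. apply subset_eq_compat. symmetry. apply (rep_spec (exist _ P HP)).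
Qed.

Lemma rep_upi a : U (fun i => rep (upi a) i = a i).
Proof. apply upi_eq. rewrite upi_rep. reflexivity. Qed.

Lemma upi_op f (args : Fin.t (arity L f) -> forall i, Bs i) :
  upi (fun i => interp (Bs i) f (fun k => args k i)) = interp UPstr f (fun k => upi (args k)).
Proof.
  simpl. apply upi_eq.
  apply (U_mono HU (U_fin HU (fun k i => rep (upi (args k)) i = args k i) (fun k => rep_upi (args k)))).
  intros i H. f_equal. apply functional_extensionality. intro k. auto.
Qed.

Lemma UP_is : is_ultraproduct U Bs UPstr.
Proof.
  exists upi. split; [|split].
  - intros b. exists (rep b). apply upi_rep.
  - apply upi_eq.
  - intros f args. simpl. apply upi_eq.
    apply (U_mono HU (U_fin HU (fun k i => rep (upi (args k)) i = args k i) (fun k => rep_upi (args k)))).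
    intros i H. f_equal. apply functional_extensionality. intro k. auto.
Qed.
End UP.
Lemma upd_map (A B : Type) (g : A -> B) (e : nat -> A) x a :
  (fun n => g (upd e x a n)) = upd (fun n => g (e n)) x (g a).
Proof. apply functional_extensionality; intro n; unfold upd; destruct (Nat.eqb n x); auto. Qed.

Section Los.
Variable L : Lang.
Variables (I : Type) (U : (I -> Prop) -> Prop) (HU : ultrafilter U) (Bs : I -> structure L)
  (B : structure L) (pi : (forall i, Bs i) -> B)
  (Hsurj : forall b, exists a, pi a = b)
  (Heq : forall a a', pi a = pi a' <-> U (fun i => a i = a' i))
  (Hop : forall f (args : Fin.t (arity L f) -> forall i, Bs i),
        pi (fun i => interp (Bs i) f (fun k => args k i))
        = interp B f (fun k => pi (args k))).

Lemma los_term (t : term L) : forall ea : nat -> forall i, Bs i,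
  eval B (fun n => pi (ea n)) t = pi (fun i => eval (Bs i) (fun n => ea n i) t).
Proof.
  induction t as [n|f a IH]; intros ea; simpl; auto.
  rewrite (Hop f (fun k i => eval (Bs i) (fun n => ea n i) (a k))). f_equal.
  apply functional_extensionality; intro k; apply IH.
Qed.

Lemma los (phi : formula L) : forall ea : nat -> forall i, Bs i,
  sat B (fun n => pi (ea n)) phi <-> U (fun i => sat (Bs i) (fun n => ea n i) phi).
Proof.
  induction phi as [|t1 t2|p IH|p IHp q IHq|p IHp q IHq|p IHp q IHq|x p IH|x p IH];
    intros ea; simpl.
  - split; [tauto|]. intro H. exact (U_nfalse HU H).
  - rewrite !los_term. apply Heq.
  - rewrite IH. symmetry. apply (U_not HU).
  - rewrite IHp, IHq. split.
    + intros [H1 H2]. exact (U_and HU H1 H2).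
    + intros H. split; apply (U_mono HU H); tauto.
  - rewrite IHp, IHq. split.
    + intros [H1|H1]; apply (U_mono HU H1); tauto.
    + intros H. apply (U_or HU H).
  - rewrite IHp, IHq. split.
    + intros H. destruct (U_ultra HU (fun i => sat (Bs i) (fun n => ea n i) p)) as [H1|H1].
      * apply (U_mono HU (H H1)). tauto.
      * apply (U_mono HU H1). tauto.
    + intros H H1. apply (U_mono HU (U_and HU H H1)). tauto.
  - split.
    + intros [b Hb]. destruct (Hsurj b) as [a <-].
      rewrite <- upd_map in Hb. apply IH in Hb.
      apply (U_mono HU Hb). intros i Hi. exists (a i).
      rewrite <- (upd_map _ _ (fun c => c i)). exact Hi.
    + intros H.
      set (a := fun i => match excluded_middle_informative
                   (exists b, sat (Bs i) (upd (fun n => ea n i) x b) p) with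
                   | left h => proj1_sig (constructive_indefinite_description _ h)
                   | right _ => ea 0 i end).
      exists (pi a). rewrite <- upd_map. apply IH.
      apply (U_mono HU H). intros i Hi.
      rewrite (upd_map _ _ (fun c => c i)). unfold a.
      destruct excluded_middle_informative as [h|h]; [|tauto].
      destruct constructive_indefinite_description; simpl; auto.
  - split.
    + intros H. apply NNPP. intro H1. apply (U_not HU) in H1.
      set (a := fun i => match excluded_middle_informative
                   (exists b, ~ sat (Bs i) (upd (fun n => ea n i) x b) p) with
                   | left h => proj1_sig (constructive_indefinite_description _ h)
                   | right _ => ea 0 i end).
      specialize (H (pi a)). rewrite <- upd_map in H. apply IH in H.
      apply (U_nfalse HU). apply (U_mono HU (U_and HU H H1)). intros i [Hi1 Hi2].
      apply Hi2. intro b. apply NNPP; intro Hb.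
      rewrite (upd_map _ _ (fun c => c i)) in Hi1. unfold a in Hi1.
      destruct excluded_middle_informative as [h|h].
      * destruct constructive_indefinite_description; simpl in *; auto.
      * apply h; eauto.
    + intros H b. destruct (Hsurj b) as [a <-]. rewrite <- upd_map. apply IH.
      apply (U_mono HU H). intros i Hi. rewrite (upd_map _ _ (fun c => c i)). apply Hi.
Qed.

Lemma los_models (T : theory L) : (forall i, models T (Bs i)) -> models T B.
Proof.
  intros H phi Hphi e.
  assert (Hc : forall n, exists a, pi a = e n) by (intro n; apply Hsurj).
  destruct (choice _ Hc) as [ea Hea].
  replace e with (fun n => pi (ea n)) by (apply functional_extensionality; auto).
  apply los. apply (U_all HU). intro i. apply H; auto.
Qed.
End Los.

Section Basics.
Variable L : Lang.

Lemma tvars_mono (P P' : nat -> Prop) (t : term L) :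
  (forall n, P n -> P' n) -> tvars_in P t -> tvars_in P' t.
Proof. induction t as [n|f a IH]; simpl; eauto. Qed.

Lemma fvars_mono (phi : formula L) : forall (P P' : nat -> Prop),
  (forall n, P n -> P' n) -> fvars_in P phi -> fvars_in P' phi.
Proof.
  induction phi; simpl; intros P P' HP H; try tauto.
  - destruct H; split; eapply tvars_mono; eauto.
  - eauto.
  - destruct H; split; eauto.
  - destruct H; split; eauto.
  - destruct H; split; eauto.
  - eapply IHphi; [|exact H]. simpl. intros m [->|Hm]; auto.
  - eapply IHphi; [|exact H]. simpl. intros m [->|Hm]; auto.
Qed.

Lemma eval_coinc (A : structure L) (P : nat -> Prop) (e e' : nat -> A) (t : term L) :
  tvars_in P t -> (forall n, P n -> e n = e' n) -> eval A e t = eval A e' t.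
Proof.
  induction t as [n|f a IH]; simpl; intros Ht He; auto.
  f_equal. apply functional_extensionality. intro k. eauto.
Qed.

Lemma upd_agree (X : Type) (P : nat -> Prop) (e e' : nat -> X) x a :
  (forall m, P m -> e m = e' m) -> forall m, (m = x \/ P m) -> upd e x a m = upd e' x a m.
Proof.
  intros H m Hm. unfold upd. destruct (Nat.eqb m x) eqn:E; auto.
  apply Nat.eqb_neq in E. destruct Hm; [congruence|auto].
Qed.

Lemma sat_coinc (A : structure L) (phi : formula L) : forall (P : nat -> Prop) (e e' : nat -> A),
  fvars_in P phi -> (forall n, P n -> e n = e' n) -> (sat A e phi <-> sat A e' phi).
Proof.
  induction phi; simpl; intros P e e' H He; try tauto.
  - destruct H. rewrite (eval_coinc _ _ e e' t H He), (eval_coinc _ _ e e' t0 H0 He). tauto.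
  - rewrite (IHphi P e e' H He). tauto.
  - destruct H. rewrite (IHphi1 P e e' H He), (IHphi2 P e e' H0 He). tauto.
  - destruct H. rewrite (IHphi1 P e e' H He), (IHphi2 P e e' H0 He). tauto.
  - destruct H. rewrite (IHphi1 P e e' H He), (IHphi2 P e e' H0 He). tauto.
  - split; intros [a Ha]; exists a.
    + exact (proj1 (IHphi _ (upd e n a) (upd e' n a) H (upd_agree _ _ _ _ _ _ He)) Ha).
    + exact (proj2 (IHphi _ (upd e n a) (upd e' n a) H (upd_agree _ _ _ _ _ _ He)) Ha).
  - split; intros Ha a; specialize (Ha a).
    + exact (proj1 (IHphi _ (upd e n a) (upd e' n a) H (upd_agree _ _ _ _ _ _ He)) Ha).
    + exact (proj2 (IHphi _ (upd e n a) (upd e' n a) H (upd_agree _ _ _ _ _ _ He)) Ha).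
Qed.

Lemma eval_hom (A B : structure L) (h : A -> B) (e : nat -> A) (t : term L) :
  hom A B h -> eval B (fun n => h (e n)) t = h (eval A e t).
Proof.
  intros Hh. induction t as [n|f a IH]; simpl; auto.
  rewrite Hh. f_equal. apply functional_extensionality. auto.
Qed.

Lemma sat_qf_emb (A B : structure L) (h : A -> B) (e : nat -> A) (phi : formula L) :
  embedding A B h -> qfree phi -> (sat B (fun n => h (e n)) phi <-> sat A e phi).
Proof.
  intros [Hh Hi]. induction phi; simpl; intros Hq.
  all: try tauto.
  all: try (rewrite !eval_hom by auto; split; [apply Hi|congruence]).
  all: try (rewrite IHphi by auto; tauto).
  all: try (destruct Hq; rewrite IHphi1, IHphi2 by auto; tauto).
Qed.

Lemma sat_eq_conj (A : structure L) (e : nat -> A) eqs :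
  sat A e (eq_conj eqs) <-> (forall p, In p eqs -> eval A e (fst p) = eval A e (snd p)).
Proof.
  induction eqs as [|[t1 t2] eqs IH]; simpl.
  - split; [intros _ p []|intros _ H; exact H].
  - rewrite IH. split.
    + intros [H1 H2] p [<-|Hp]; auto.
    + intros H; split; [apply (H (t1,t2)); auto|intros p Hp; apply H; auto].
Qed.

Lemma qfree_eq_conj eqs : qfree (@eq_conj L eqs).
Proof. induction eqs; simpl; auto. Qed.

Definition allc (l : list nat) (p : formula L) : formula L := fold_right (fun x q => All x q) p l.

Lemma sat_allc_intro (A : structure L) l p :
  (forall e, sat A e p) -> forall e, sat A e (allc l p).
Proof. induction l; simpl; auto. Qed.

Lemma upd_same (X : Type) (e : nat -> X) x : upd e x (e x) = e.
Proof.
  apply functional_extensionality; intro n; unfold upd.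
  destruct (Nat.eqb n x) eqn:E; auto. apply Nat.eqb_eq in E. subst; auto.
Qed.

Lemma sat_allc_elim (A : structure L) l p e :
  sat A e (allc l p) -> sat A e p.
Proof.
  induction l; simpl; auto. intros H. specialize (H (e a)). rewrite upd_same in H. auto.
Qed.

Lemma universal_allc l p : qfree p -> universal (allc l p).
Proof. intro Hq. induction l; simpl; auto. destruct p; simpl in *; tauto. Qed.

Lemma fvars_allc l : forall P p, fvars_in (fun n => In n l \/ P n) p -> fvars_in P (allc l p).
Proof.
  induction l as [|x l IH]; simpl; intros P p H.
  - eapply fvars_mono; [|exact H]. intros n [H0|Hn]; [inversion H0|exact Hn].
  - apply IH. eapply fvars_mono; [|exact H]. simpl. intros n [[H0|H0]|H0]; auto.
Qed.
End Basics.

(** * Finite sets of facts and compactness for embeddings *)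
Section Facts.
Variable L : Lang.

Inductive fact (A : structure L) : Type :=
| FOp : forall f, (Fin.t (arity L f) -> A) -> fact A
| FNeq : A -> A -> fact A.

Definition fact_ok (A B : structure L) (g : A -> B) (fc : fact A) : Prop :=
  match fc with
  | FOp f args => g (interp A f args) = interp B f (fun k => g (args k))
  | FNeq a b => a <> b -> g a <> g b
  end.
Arguments fact_ok {A B} g fc.

Lemma compact_embed (A : structure L) (Q : structure L -> Prop)
  (HQ : forall (U : (list (fact A) -> Prop) -> Prop) (Bs : list (fact A) -> structure L) (B : structure L),
      ultrafilter U -> (forall i, Q (Bs i)) -> is_ultraproduct U Bs B -> Q B)
  (chi : formula L) (eA : nat -> A) :
  (forall F : list (fact A), exists (B : structure L) (g : A -> B),
      Q B /\ (forall fc, In fc F -> fact_ok g fc) /\ sat B (fun n => g (eA n)) chi) ->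
  exists (B : structure L) (h : A -> B), Q B /\ embedding A B h /\ sat B (fun n => h (eA n)) chi.
Proof.
  intros H.
  assert (H' : forall F : list (fact A), exists p : {B : structure L & A -> B},
      Q (projT1 p) /\ (forall fc, In fc F -> fact_ok (projT2 p) fc) /\
      sat (projT1 p) (fun n => projT2 p (eA n)) chi).
  { intros F. destruct (H F) as (B & g & H1). exists (existT _ B g). exact H1. }
  destruct (choice _ H') as [c Hc].
  set (Bs := fun F => projT1 (c F)).
  set (g := fun F => projT2 (c F) : A -> Bs F).
  destruct (list_ultra (fact A)) as [U [HU HUx]].
  exists (@UPstr L _ U Bs), (fun a => @upi L _ U Bs (fun F => g F a)).
  split; [|split; [split|]].
  - eapply HQ; [exact HU| |apply UP_is; exact HU]. intro i. apply (Hc i).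
  - intros f args. rewrite <- upi_op by exact HU. apply upi_eq; [exact HU|].
    apply (U_mono HU (HUx (FOp _ f args))). intros i Hi.
    destruct (Hc i) as (_ & Hi2 & _). exact (Hi2 _ Hi).
  - intros a b Hab. apply (proj1 (upi_eq L _ U HU Bs _ _)) in Hab.
    apply NNPP. intro Hne.
    apply (U_nfalse HU). apply (U_mono HU (U_and HU Hab (HUx (FNeq _ a b)))).
    intros i [Hi1 Hi2]. destruct (Hc i) as (_ & Hi3 & _). exact (Hi3 _ Hi2 Hne Hi1).
  - assert (Hs : forall b, exists a, @upi L _ U Bs a = b).
    { intro b. exists (@rep L _ U Bs b). apply upi_rep. }
    pose proof (upi_eq L _ U HU Bs) as He.
    pose proof (upi_op L _ U HU Bs) as Ho.
    apply (proj2 (los L _ U HU Bs (@UPstr L _ U Bs) (@upi L _ U Bs) Hs He Ho chi (fun n F => g F (eA n)))).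
    apply U_all; [exact HU|]. intro i. apply (Hc i).
Qed.
End Facts.
Arguments fact {L} A.
Arguments FOp {L A} f _.
Arguments FNeq {L A} _ _.
Arguments fact_ok {L A B} g fc.


Section Diag.
Variable L : Lang.

Definition deq {X : Type} (x y : X) : {x = y} + {x <> y} := excluded_middle_informative (x = y).

Fixpoint idx {X : Type} (l : list X) (a : X) : nat :=
  match l with
  | nil => 0
  | b :: l' => if deq a b then 0 else S (idx l' a)
  end.

Lemma idx_spec {X : Type} (l : list X) (a d : X) :
  In a l -> idx l a < length l /\ nth (idx l a) l d = a.
Proof.
  induction l as [|b l IH]; simpl; [tauto|]. intros H.
  destruct (deq a b) as [->|Hne]; [split; auto; lia|].
  destruct H as [->|H]; [congruence|]. destruct (IH H). split; auto. lia.
Qed.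

Fixpoint fin_list (n : nat) : list (Fin.t n) :=
  match n with
  | 0 => nil
  | S n => Fin.F1 :: map Fin.FS (fin_list n)
  end.

Lemma fin_list_in n (k : Fin.t n) : In k (fin_list n).
Proof.
  induction k as [n|n k IH]; simpl; auto. right. apply in_map. auto.
Qed.

Variable A : structure L.

Definition fact_elems (fc : fact A) : list A :=
  match fc with
  | FOp f args => interp A f args :: map args (fin_list _)
  | FNeq a b => [a; b]
  end.

Definition elems (F : list (fact A)) : list A := flat_map fact_elems F.

Definition fact_form (l : list A) (fc : fact A) : formula L :=
  match fc with
  | FOp f args => Eq (Defs.app f (fun k => var (idx l (args k)))) (var (idx l (interp A f args)))
  | FNeq a b => if deq a b then Neg Fal else Neg (Eq (var (idx l a)) (var (idx l b)))
  end.

Definition delta (l : list A) (F : list (fact A)) : formula L :=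
  fold_right (fun fc acc => Conj (fact_form l fc) acc) (Neg Fal) F.

Lemma delta_qfree l F : qfree (delta l F).
Proof.
  induction F as [|fc F IH]; simpl; auto. split; auto.
  destruct fc; simpl; auto. destruct deq; simpl; auto.
Qed.

Lemma delta_fvars l F :
  (forall fc, In fc F -> forall a, In a (fact_elems fc) -> In a l) ->
  fvars_in (fun n => n < length l) (delta l F).
Proof.
  pose proof (fun a (H : In a l) => proj1 (idx_spec l a a H)) as Hi.
  induction F as [|fc F IH]; simpl; intros H; auto. split; [|apply IH; intros fc0 Hfc0; apply H; right; exact Hfc0].
  destruct fc as [f args|a b]; simpl.
  - split.
    + intro k. apply Hi. apply (H _ (or_introl eq_refl)). simpl. right. apply in_map. apply fin_list_in.
    + apply Hi. apply (H _ (or_introl eq_refl)). simpl. auto.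
  - destruct deq; simpl; auto. split; apply Hi; apply (H _ (or_introl eq_refl)); simpl; auto.
Qed.

Lemma delta_sat l F (d : A) :
  (forall fc, In fc F -> forall a, In a (fact_elems fc) -> In a l) ->
  sat A (fun n => nth n l d) (delta l F).
Proof.
  pose proof (fun a (H : In a l) => proj2 (idx_spec l a d H)) as Hi.
  induction F as [|fc F IH]; simpl; intros H; [tauto|]. split; [|apply IH; intros fc0 Hfc0; apply H; right; exact Hfc0].
  destruct fc as [f args|a b]; simpl.
  - rewrite Hi by (apply (H _ (or_introl eq_refl)); simpl; auto).
    f_equal. apply functional_extensionality. intro k. apply Hi.
    apply (H _ (or_introl eq_refl)). simpl. right. apply in_map. apply fin_list_in.
  - destruct deq as [Heq|Hne]; simpl; [tauto|].
    rewrite !Hi by (apply (H _ (or_introl eq_refl)); simpl; auto). auto.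
Qed.

Lemma delta_ok l F (B : structure L) (e : nat -> B) :
  sat B e (delta l F) -> forall fc, In fc F -> fact_ok (fun a => e (idx l a)) fc.
Proof.
  induction F as [|fc F IH]; simpl; [tauto|]. intros [H1 H2] fc' [<-|Hin]; auto.
  destruct fc as [f args|a b]; simpl in *.
  - auto.
  - intros Hne. destruct deq; [congruence|]. simpl in H1. auto.
Qed.

Definition dpsi (F : list (fact A)) : formula L :=
  allc L (seq 0 (length (elems F))) (Neg (delta (elems F) F)).

Lemma elems_in F : forall fc, In fc F -> forall a, In a (fact_elems fc) -> In a (elems F).
Proof. intros fc Hfc a Ha. unfold elems. apply in_flat_map. eauto. Qed.

Lemma dpsi_sentence F : sentence (dpsi F).
Proof.
  apply fvars_allc. simpl. refine (fvars_mono _ _ _ _ _ (delta_fvars (elems F) F (elems_in F))).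
  intros n Hn. left. apply in_seq. lia.
Qed.

Lemma dpsi_universal F : universal (dpsi F).
Proof. apply universal_allc. simpl. apply delta_qfree. Qed.

Lemma dpsi_false F (d : A) : ~ sat A (fun n => nth n (elems F) d) (dpsi F).
Proof.
  intros H. apply sat_allc_elim in H. apply H. apply delta_sat. apply elems_in.
Qed.

Lemma dpsi_true F (B : structure L) :
  (forall e : nat -> B, ~ sat B e (delta (elems F) F)) -> forall e, sat B e (dpsi F).
Proof. intros H. apply sat_allc_intro. exact H. Qed.
End Diag.

(** * Consequences of the model completion hypothesis *)
Section Main.
Variable L : Lang.
Variable K : structure L -> Prop.
Hypothesis hc : has_constant L.
Hypothesis HK : universal_class K.
Variable Tstar : theory L.
Hypothesis Hmc : model_completion (Th K) Tstar.

Definition pt (A : structure L) : A :=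
  let c := constructive_indefinite_description _ hc in
  interp A (proj1_sig c)
    (fun k => Fin.case0 (fun _ => carrier A) (eq_rect _ Fin.t k _ (proj2_sig c))).

Lemma K_models_Th A : K A -> models (Th K) A.
Proof. intros HA phi [_ Hphi] e. apply Hphi; auto. Qed.

Lemma Tstar_up (I : Type) (U : (I -> Prop) -> Prop) (Bs : I -> structure L) (B : structure L) :
  ultrafilter U -> (forall i, models Tstar (Bs i)) -> is_ultraproduct U Bs B -> models Tstar B.
Proof.
  intros HU HBs (pi & Hs & He & Ho). eapply los_models; eauto.
Qed.

Lemma K_up (I : Type) (U : (I -> Prop) -> Prop) (Bs : I -> structure L) (B : structure L) :
  ultrafilter U -> (forall i, K (Bs i)) -> is_ultraproduct U Bs B -> K B.
Proof. destruct HK as (_ & _ & H). apply H. Qed.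

Lemma embed_T (A : structure L) (chi : formula L) (eA : nat -> A) :
  K A ->
  (forall F : list (fact A), exists (B : structure L) (g : A -> B),
      models Tstar B /\ (forall fc, In fc F -> fact_ok g fc) /\ sat B (fun n => g (eA n)) chi) ->
  exists (B : structure L) (h : A -> B), models Tstar B /\ embedding A B h /\ sat B (fun n => h (eA n)) chi.
Proof.
  intros HA H. apply compact_embed; [|exact H].
  intros U Bs B HU HBs HB. eapply Tstar_up; eauto.
Qed.

Lemma embed_T0 (A : structure L) :
  K A -> exists (B : structure L) (h : A -> B), models Tstar B /\ embedding A B h.
Proof.
  intros HA.
  destruct (embed_T A (Neg Fal) (fun _ => pt A) HA) as (B & h & H1 & H2 & _); [|eauto].
  intros F.
  destruct (classic (exists (B : structure L) (e : nat -> B), models Tstar B /\ sat B e (delta L A (elems L A F) F)))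
    as [(B & e & HB & He)|Hn].
  - exists B, (fun a => e (idx (elems L A F) a)). split; [auto|split].
    + apply delta_ok. exact He.
    + simpl. tauto.
  - exfalso.
    assert (Hent : entails Tstar (dpsi L A F)).
    { intros B HB e. apply dpsi_true. intros e' He'. apply Hn. eauto. }
    destruct Hmc as (_ & Huniv & _).
    apply (proj2 (Huniv _ (dpsi_sentence L A F) (dpsi_universal L A F))) in Hent.
    apply (dpsi_false L A F (pt A)). apply Hent. apply K_models_Th. exact HA.
Qed.

Lemma K_of_embedding (C B : structure L) (h : C -> B) :
  embedding C B h -> K B -> K C.
Proof.
  intros [Hh Hi] HB.
  set (P := fun b : B => exists c, h c = b).
  assert (HP : op_closed B P).
  { intros f args Hargs. unfold P in Hargs.
    destruct (choice _ Hargs) as [c Hc]. exists (interp C f c). rewrite Hh. f_equal.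
    apply functional_extensionality. auto. }
  destruct HK as (Hiso & Hsub & _).
  set (j := fun s : @subalgebra L B P HP => proj1_sig (constructive_indefinite_description _ (proj2_sig s))).
  assert (Hj : forall s, h (j s) = proj1_sig s).
  { intro s. unfold j. destruct constructive_indefinite_description; auto. }
  apply (Hiso (@subalgebra L B P HP) C j (Hsub B P HP HB)).
  split; [split|].
  - intros f args. apply Hi. rewrite Hj. simpl. rewrite Hh. f_equal.
    apply functional_extensionality. intro k. rewrite Hj. reflexivity.
  - intros s s' Hss'. destruct s as [s Hs], s' as [s' Hs'].
    apply subset_eq_compat. pose proof (Hj (exist _ s Hs)) as E1; pose proof (Hj (exist _ s' Hs')) as E2; simpl in E1, E2. transitivity (h (j (exist _ s Hs))); [symmetry; exact E1|]. transitivity (h (j (exist _ s' Hs'))); [f_equal; exact Hss'|exact E2].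
  - intros c. exists (exist P (h c) (ex_intro _ c eq_refl)). apply Hi. rewrite Hj. reflexivity.
Qed.

Lemma T_in_K (C : structure L) : models Tstar C -> K C.
Proof.
  intros HC.
  destruct (compact_embed L C K (fun U Bs B HU HBs HB => K_up _ U Bs B HU HBs HB) (Neg Fal) (fun _ => pt C))
    as (B & h & H1 & H2 & _).
  2: { eapply K_of_embedding; eauto. }
  intros F.
  destruct (classic (exists (B : structure L) (e : nat -> B), K B /\ sat B e (delta L C (elems L C F) F)))
    as [(B & e & HB & He)|Hn].
  - exists B, (fun a => e (idx (elems L C F) a)). split; [auto|split].
    + apply delta_ok. exact He.
    + simpl. tauto.
  - exfalso.
    assert (Hth : Th K (dpsi L C F)).
    { split; [apply dpsi_sentence|]. intros A HA e. apply dpsi_true. intros e' He'. apply Hn. eauto. }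
    assert (Hent : entails (Th K) (dpsi L C F)).
    { intros B HB e. apply HB. exact Hth. }
    destruct Hmc as (_ & Huniv & _).
    apply (proj1 (Huniv _ (dpsi_sentence L C F) (dpsi_universal L C F))) in Hent.
    apply (dpsi_false L C F (pt C)). apply Hent. exact HC.
Qed.
End Main.

(** * Using completeness of T* plus the diagram *)
Section ClaimA.
Variable L : Lang.
Variable K : structure L -> Prop.
Hypothesis hc : has_constant L.
Hypothesis HK : universal_class K.
Variable Tstar : theory L.
Hypothesis Hmc : model_completion (Th K) Tstar.

Definition expB (M B : structure L) (h : M -> B) : structure (Lexp L M) :=
  {| carrier := B;
     interp := fun s =>
       match s return (Fin.t (arity (Lexp L M) s) -> B) -> B with
       | inl f => fun args => interp B f args
       | inr m => fun _ => h m
       end |}.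

Lemma eval_tlift (M B : structure L) (h : M -> B) (e : nat -> B) (t : term L) :
  eval (expB M B h) e (tlift M t) = eval B e t.
Proof.
  induction t as [n|f a IH]; simpl; auto. f_equal. apply functional_extensionality. auto.
Qed.

Lemma sat_flift (M B : structure L) (h : M -> B) (phi : formula L) : forall (e : nat -> B),
  sat (expB M B h) e (flift M phi) <-> sat B e phi.
Proof.
  induction phi; intros e; simpl; rewrite ?eval_tlift; try tauto.
  - rewrite IHphi. tauto.
  - rewrite IHphi1, IHphi2. tauto.
  - rewrite IHphi1, IHphi2. tauto.
  - rewrite IHphi1, IHphi2. tauto.
  - split; intros [a Ha]; exists a; apply IHphi; auto.
  - split; intros Ha a; apply IHphi; auto.
Qed.

Lemma eval_exp_hom (M B : structure L) (h : M -> B) (e : nat -> M) (t : term (Lexp L M)) :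
  hom M B h -> eval (expB M B h) (fun n => h (e n)) t = h (eval (expand M) e t).
Proof.
  intros Hh. induction t as [n|f a IH]; simpl; auto.
  destruct f as [f|m]; simpl; auto.
  rewrite Hh. f_equal. apply functional_extensionality. intro k. apply IH.
Qed.

Lemma expB_models (M B : structure L) (h : M -> B) :
  embedding M B h -> models Tstar B ->
  models (fun psi => @lift_theory L M Tstar psi \/ diagram M psi) (expB M B h).
Proof.
  intros [Hh Hi] HB psi [[phi [Hphi ->]]|(Hs & (t1 & t2 & Ht) & Hd)] e.
  - apply sat_flift. apply HB. exact Hphi.
  - apply (proj2 (sat_coinc _ _ psi (fun _ => False) e (fun n => h (pt L hc M)) Hs (fun n (f : False) => match f with end))).
    specialize (Hd (fun _ => pt L hc M)).
    destruct Ht as [->| ->]; simpl in *.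
    + rewrite !eval_exp_hom by exact Hh. congruence.
    + rewrite !eval_exp_hom by exact Hh. intro E. apply Hd. apply Hi. exact E.
Qed.

Fixpoint tsub (M : structure L) (y : nat) (eA : nat -> M) (t : term L) : term (Lexp L M) :=
  match t with
  | var n => if Nat.eqb n y then var n
             else @Defs.app (Lexp L M) (inr (eA n)) (fun _ => var 0)
  | Defs.app f a => @Defs.app (Lexp L M) (inl f) (fun k => tsub M y eA (a k))
  end.

Lemma eval_tsub (M B : structure L) (h : M -> B) y eA (g : nat -> B) (t : term L) :
  eval (expB M B h) g (tsub M y eA t) = eval B (fun n => if Nat.eqb n y then g n else h (eA n)) t.
Proof.
  induction t as [n|f a IH]; simpl.
  - destruct (Nat.eqb n y); reflexivity.
  - f_equal. apply functional_extensionality. auto.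
Qed.

Lemma tvars_tsub (M : structure L) y eA (t : term L) :
  tvars_in (fun n => n = y \/ False) (tsub M y eA t).
Proof.
  induction t as [n|f a IH]; simpl.
  - destruct (Nat.eqb n y) eqn:E; simpl.
    + left. apply Nat.eqb_eq. exact E.
    + intro i. exact (Fin.case0 (fun _ => 0 = y \/ False) i).
  - auto.
Qed.

Lemma fvars_eq_conj (L' : Lang) (P : nat -> Prop) (eqs : list (term L' * term L')) :
  (forall p, In p eqs -> tvars_in P (fst p) /\ tvars_in P (snd p)) -> fvars_in P (eq_conj eqs).
Proof.
  induction eqs as [|p eqs IH]; simpl; intros H; [exact I|]. split; [apply H; left; reflexivity|]. apply IH. intros; apply H; right; auto.
Qed.

Definition psiEx (M : structure L) y eA (eqs : list (term L * term L)) : formula (Lexp L M) :=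
  Ex y (eq_conj (map (fun p => (tsub M y eA (fst p), tsub M y eA (snd p))) eqs)).

Lemma psiEx_sentence M y eA eqs : sentence (psiEx M y eA eqs).
Proof.
  unfold sentence, psiEx. simpl. apply fvars_eq_conj. intros p Hp.
  apply in_map_iff in Hp. destruct Hp as [q [<- _]]. simpl. split; apply tvars_tsub.
Qed.

Lemma sat_psiEx (M B : structure L) (h : M -> B) y eA eqs (g : nat -> B) :
  sat (expB M B h) g (psiEx M y eA eqs) <-> sat B (fun n => h (eA n)) (Ex y (eq_conj eqs)).
Proof.
  unfold psiEx. simpl. split; intros [b Hb]; exists b; rewrite sat_eq_conj in *.
  - intros p Hp. specialize (Hb _ (in_map (fun p => (tsub M y eA (fst p), tsub M y eA (snd p))) _ _ Hp)).
    simpl in Hb. rewrite !eval_tsub in Hb.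
    replace (upd (fun n => h (eA n)) y b) with (fun n => if Nat.eqb n y then upd g y b n else h (eA n)).
    + exact Hb.
    + apply functional_extensionality. intro n. unfold upd. destruct (Nat.eqb n y); auto.
  - intros p Hp. apply in_map_iff in Hp. destruct Hp as [q [<- Hq]]. simpl.
    rewrite !eval_tsub.
    replace (fun n => if Nat.eqb n y then upd g y b n else h (eA n)) with (upd (fun n => h (eA n)) y b).
    + apply Hb. exact Hq.
    + apply functional_extensionality. intro n. unfold upd. destruct (Nat.eqb n y); auto.
Qed.

Lemma claimA (M : structure L) (HM : K M) (B1 B2 : structure L) (h1 : M -> B1) (h2 : M -> B2)
  (eA : nat -> M) y eqs :
  models Tstar B1 -> models Tstar B2 -> embedding M B1 h1 -> embedding M B2 h2 ->
  sat B1 (fun n => h1 (eA n)) (Ex y (eq_conj eqs)) -> sat B2 (fun n => h2 (eA n)) (Ex y (eq_conj eqs)).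
Proof.
  intros HB1 HB2 He1 He2 Hs.
  destruct Hmc as (_ & _ & Hcomp).
  destruct (Hcomp M (K_models_Th L K M HM) _ (psiEx_sentence M y eA eqs)) as [Hc|Hc].
  - apply (sat_psiEx M B2 h2 y eA eqs (fun _ => h2 (pt L hc M))).
    apply Hc. apply expB_models; auto.
  - exfalso. apply (Hc (expB M B1 h1) (expB_models M B1 h1 He1 HB1) (fun _ => h1 (pt L hc M))).
    apply sat_psiEx. exact Hs.
Qed.
End ClaimA.

Definition conjl (L : Lang) (l : list (formula L)) : formula L :=
  fold_right (fun p acc => Conj p acc) (Neg Fal) l.

Lemma sat_conjl (L : Lang) (A : structure L) e l :
  sat A e (conjl L l) <-> (forall p, In p l -> sat A e p).
Proof.
  induction l as [|p l IH]; simpl.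
  - split; [intros _ q []|intros _ H; exact H].
  - rewrite IH. split.
    + intros [H1 H2] q [<-|Hq]; auto.
    + intros H; split; [apply H; auto|intros q Hq; apply H; auto].
Qed.

Lemma qfree_conjl (L : Lang) l : (forall p, In p l -> qfree p) -> qfree (conjl L l).
Proof.
  induction l as [|p l IH]; simpl; intros H; [exact I|]. split; [apply H; auto|]. apply IH; auto.
Qed.

Lemma fvars_conjl (L : Lang) P l : (forall p, In p l -> fvars_in P p) -> fvars_in P (conjl L l).
Proof.
  induction l as [|p l IH]; simpl; intros H; [exact I|]. split; [apply H; auto|]. apply IH; auto.
Qed.

Section Final.
Variable L : Lang.
Variable K : structure L -> Prop.
Hypothesis hc : has_constant L.
Hypothesis HK : universal_class K.
Variable Tstar : theory L.
Hypothesis Hmc : model_completion (Th K) Tstar.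
Variable xs : list nat.
Variable y : nat.
Hypothesis Hy : ~ In y xs.
Variable eqs : list (term L * term L).
Hypothesis Heqs : forall p, In p eqs ->
       tvars_in (fun v => In v xs \/ v = y) (fst p) /\
       tvars_in (fun v => In v xs \/ v = y) (snd p).

Let Pxs := fun v => In v xs.
Let ExPhi := Ex y (eq_conj eqs).

Lemma ExPhi_fvars : fvars_in Pxs ExPhi.
Proof.
  unfold ExPhi. simpl. apply fvars_eq_conj. intros p Hp. destruct (Heqs p Hp) as [Ha Hb].
  split; (eapply tvars_mono; [|eassumption]); unfold Pxs; simpl; intros n [Hn|Hn]; auto; subst; auto.
Qed.

Definition PhiS (psi : formula L) : Prop :=
  qfree psi /\ fvars_in Pxs psi /\
  (forall (C : structure L) e, models Tstar C -> sat C e ExPhi -> sat C e psi).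

Section Contra.
Hypothesis Hno : forall l : list (formula L), exists p : {C : structure L & nat -> C},
  models Tstar (projT1 p) /\ (forall psi, In psi l -> PhiS psi -> sat (projT1 p) (projT2 p) psi) /\
  ~ sat (projT1 p) (projT2 p) ExPhi.

Lemma contra : False.
Proof.
  destruct (choice _ Hno) as [c Hc].
  set (Cs := fun l => projT1 (c l)).
  set (es := fun l => projT2 (c l) : nat -> Cs l).
  destruct (list_ultra (formula L)) as [U [HU HUx]].
  set (C := @UPstr L _ U Cs).
  set (e := fun n => @upi L _ U Cs (fun l => es l n) : C).
  assert (Hs : forall b, exists a, @upi L _ U Cs a = b).
  { intro b. exists (@rep L _ U Cs b). apply upi_rep. }
  pose proof (los L _ U HU Cs C (@upi L _ U Cs) Hs (upi_eq L _ U HU Cs) (upi_op L _ U HU Cs)) as Hlos.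
  assert (HCT : models Tstar C).
  { eapply Tstar_up; [exact HU| |apply UP_is; exact HU]. intro i. apply (Hc i). }
  assert (HCK : K C) by (eapply T_in_K; eauto).
  assert (Hpsi : forall psi, PhiS psi -> sat C e psi).
  { intros psi Hp. apply (proj2 (Hlos psi (fun n l => es l n))).
    apply (U_mono HU (HUx psi)). intros i Hi. apply (Hc i); auto. }
  assert (HnEx : ~ sat C e ExPhi).
  { intro H. apply (proj1 (Hlos ExPhi (fun n l => es l n))) in H.
    apply (U_nfalse HU). apply (U_mono HU H). intros i Hi. apply (Hc i). exact Hi. }
  set (Pg := fun c : C => exists t, tvars_in Pxs t /\ eval C e t = c).
  assert (HPg : op_closed C Pg).
  { intros f args Hargs. destruct (choice _ Hargs) as [ts Hts].
    exists (Defs.app f ts). split; [simpl; intro i; apply (Hts i)|].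
    change (interp C f (fun k => eval C e (ts k)) = interp C f args).
    apply (f_equal (interp C f)). apply functional_extensionality. intro k. apply (Hts k). }
  set (A := @subalgebra L C Pg HPg).
  assert (HA : K A) by (destruct HK as (_ & Hsub & _); apply Hsub; exact HCK).
  set (val := fun a : A => proj1_sig a).
  assert (Hval : embedding A C val).
  { split.
    - intros f args. reflexivity.
    - intros [a Ha] [b Hb] Hab. apply subset_eq_compat. exact Hab. }
  set (tau := fun a : A => proj1_sig (constructive_indefinite_description _ (proj2_sig a))).
  assert (Htau : forall a, tvars_in Pxs (tau a) /\ eval C e (tau a) = val a).
  { intro a. unfold tau. destruct constructive_indefinite_description; auto. }
  set (eA := fun n => match excluded_middle_informative (In n xs) with
                      | left Hin => exist Pg (e n) (ex_intro _ (var n) (conj Hin eq_refl)) : A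
                      | right _ => pt L hc A end).
  assert (HeA : forall n, In n xs -> val (eA n) = e n).
  { intros n Hn. unfold eA. destruct excluded_middle_informative; [reflexivity|contradiction]. }
  set (tform := fun fc : fact A => match fc with
     | FOp f args => Eq (Defs.app f (fun k => tau (args k))) (tau (interp A f args))
     | FNeq a b => if deq a b then Neg Fal else Neg (Eq (tau a) (tau b)) end).
  set (dt := fun F : list (fact A) =>
     Conj (conjl L (map tform F)) (eq_conj (map (fun x => (tau (eA x), @var L x)) xs))).
  assert (Hdt_C : forall F, sat C e (dt F)).
  { intro F. split.
    - apply sat_conjl. intros p Hp. apply in_map_iff in Hp. destruct Hp as [fc [<- _]].
      destruct fc as [f args|a b].
      + change (eval C e (Defs.app f (fun k => tau (args k))) = eval C e (tau (interp A f args))).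
        rewrite (proj2 (Htau (interp A f args))).
        change (interp C f (fun k => eval C e (tau (args k))) = val (interp A f args)).
        transitivity (interp C f (fun k => val (args k))); [|reflexivity].
        apply (f_equal (interp C f)). apply functional_extensionality. intro k. apply Htau.
      + unfold tform. destruct (deq a b) as [E|E]; [simpl; tauto|].
        change (eval C e (tau a) <> eval C e (tau b)).
        rewrite (proj2 (Htau a)), (proj2 (Htau b)).
        intro E'. apply E. apply Hval. exact E'.
    - apply sat_eq_conj. intros p Hp. apply in_map_iff in Hp. destruct Hp as [x [<- Hx]].
      change (eval C e (tau (eA x)) = e x).
      rewrite (proj2 (Htau _)). apply HeA. exact Hx. }
  assert (Hdt_q : forall F, qfree (dt F)).
  { intro F. simpl. split; [|apply qfree_eq_conj]. apply qfree_conjl.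
    intros p Hp. apply in_map_iff in Hp. destruct Hp as [fc [<- _]].
    destruct fc; simpl; auto. destruct deq; simpl; auto. }
  assert (Hdt_f : forall F, fvars_in Pxs (dt F)).
  { intro F. simpl. split.
    - apply fvars_conjl. intros p Hp. apply in_map_iff in Hp. destruct Hp as [fc [<- _]].
      destruct fc as [f args|a b]; simpl.
      + split; [intro k|]; apply Htau.
      + destruct deq; simpl; auto. split; apply Htau.
    - apply fvars_eq_conj. intros p Hp. apply in_map_iff in Hp. destruct Hp as [x [<- Hx]].
      simpl. split; [apply Htau|exact Hx]. }
  destruct (embed_T L K Tstar A ExPhi eA HA) as (D & h & HD & Hh & HDs).
  - intro F.
    destruct (classic (exists (B : structure L) (eB : nat -> B),
                 models Tstar B /\ sat B eB (dt F) /\ sat B eB ExPhi)) as [(B & eB & HB1 & HB2 & HB3)|Hn].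
    + exists B, (fun a => eval B eB (tau a)). split; [exact HB1|split].
      * intros fc Hfc. destruct HB2 as [HB2 _]. rewrite sat_conjl in HB2.
        specialize (HB2 (tform fc) (in_map _ _ _ Hfc)).
        destruct fc as [f args|a b]; simpl in *.
        -- symmetry. exact HB2.
        -- intros E. destruct deq; [contradiction|]. exact HB2.
      * refine (proj1 (sat_coinc _ _ _ Pxs eB _ ExPhi_fvars _) HB3).
        intros n Hn. destruct HB2 as [_ HB2]. rewrite sat_eq_conj in HB2.
        symmetry. exact (HB2 (tau (eA n), var n) (in_map (fun x => (tau (eA x), @var L x)) _ _ Hn)).
    + exfalso. apply (Hpsi (Neg (dt F))) ; [|exact (Hdt_C F)].
      split; [exact (Hdt_q F)|split; [exact (Hdt_f F)|]].
      intros C' e' HC' HE' Hd. apply Hn. exists C', e'. auto.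
  - apply HnEx.
    pose proof (claimA L K hc Tstar Hmc A HA D C h val eA y eqs HD HCT Hh Hval HDs) as H.
    refine (proj1 (sat_coinc _ _ _ Pxs _ _ ExPhi_fvars _) H).
    intros n Hn. apply HeA. exact Hn.
Qed.
End Contra.

Lemma claim : exists l : list (formula L), (forall psi, In psi l -> PhiS psi) /\
  (forall (C : structure L) e, models Tstar C -> (forall psi, In psi l -> sat C e psi) -> sat C e ExPhi).
Proof.
  apply NNPP. intro Hno. apply contra. intro l.
  set (l' := filter (fun psi => if excluded_middle_informative (PhiS psi) then true else false) l).
  assert (Hl' : forall psi, In psi l' <-> In psi l /\ PhiS psi).
  { intro psi. unfold l'. rewrite filter_In. destruct excluded_middle_informative; intuition congruence. }
  apply NNPP. intro Hn. apply Hno. exists l'. split.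
  - intros psi Hp. apply Hl'. exact Hp.
  - intros C e HC Hall. apply NNPP. intro HnE. apply Hn. exists (existT _ C e). simpl.
    split; [exact HC|split; [|exact HnE]]. intros psi Hpsi HP. apply Hall. apply Hl'. auto.
Qed.

Lemma final : exists xi : formula L,
      qfree xi /\ fvars_in (fun v => In v xs) xi /\
      Kvalid K (Imp (eq_conj eqs) xi) /\
      (forall t1 t2 : term L,
          tvars_in (fun v => In v xs) t1 -> tvars_in (fun v => In v xs) t2 ->
          Kvalid K (Imp (eq_conj eqs) (Eq t1 t2)) ->
          Kvalid K (Imp xi (Eq t1 t2))).
Proof.
  destruct claim as [l [Hl1 Hl2]]. exists (conjl L l).
  assert (Hq : qfree (conjl L l)) by (apply qfree_conjl; intros p Hp; apply Hl1; auto).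
  split; [exact Hq|split; [|split]].
  - apply fvars_conjl. intros p Hp. apply Hl1. auto.
  - intros A HA e Hphi. simpl in Hphi |- *.
    destruct (embed_T0 L K hc Tstar Hmc A HA) as (B & h & HB & Hh).
    apply sat_conjl. intros p Hp. destruct (Hl1 p Hp) as (Hpq & _ & Hp3).
    apply (proj1 (sat_qf_emb _ _ _ h e p Hh Hpq)). apply Hp3; [exact HB|].
    exists (h (e y)). rewrite (upd_same _ (fun n => h (e n)) y).
    apply (sat_qf_emb _ _ _ h e _ Hh (qfree_eq_conj _ _)). exact Hphi.
  - intros t1 t2 Ht1 Ht2 Hv A HA e Hxi. simpl in Hxi |- *.
    destruct (embed_T0 L K hc Tstar Hmc A HA) as (B & h & HB & Hh).
    apply (proj2 (sat_qf_emb _ _ _ h e _ Hh Hq)) in Hxi.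
    rewrite sat_conjl in Hxi.
    destruct (Hl2 B _ HB Hxi) as [b Hb].
    assert (HBK : K B) by (eapply T_in_K; eauto).
    specialize (Hv B HBK _ Hb). simpl in Hv.
    assert (Hc : forall t, tvars_in (fun v => In v xs) t ->
               eval B (upd (fun n => h (e n)) y b) t = h (eval A e t)).
    { intros t Ht. rewrite <- eval_hom by apply Hh.
      apply (eval_coinc _ _ (fun v => In v xs)); [exact Ht|].
      intros n Hn. unfold upd. destruct (Nat.eqb n y) eqn:E; [|reflexivity].
      apply Nat.eqb_eq in E. subst. contradiction. }
    rewrite !Hc in Hv by assumption. apply Hh. exact Hv.
Qed.
End Final.

Theorem proposition3p7 (L : Lang) (K : structure L -> Prop) :
  has_constant L ->
  universal_class K ->
  (exists Tstar : theory L, model_completion (Th K) Tstar) ->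
  var_projection K.
Proof.
  intros hc HK [Tstar Hmc] xs y Hy eqs Heqs.
  exact (final L K hc HK Tstar Hmc xs y Hy eqs Heqs).
Qed.
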